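(* Let $N$ and $M$ be sub-sound WF nets with disjoint node sets and let $n$ be a node of $N$ such that either $n$ is a place and $M$ is a pWF net, or $n$ is a transition and $M$ is a tWF net. Then $N\otimes_n M$ is a sub-sound WF net.
   Context: Petri nets and markings. A Petri net is a triple $(P,T,F)$ with $P$ a finite set of places, $T$ a finite set of transitions, $P\cap T=\emptyset$, and $F\subseteq (P\times T)\cup(T\times P)$. For a node $x$, $\bullet x=\{y\mid (y,x)\in F\}$, $x\bullet=\{y\mid (x,y)\in F\}$. A marking is a multiset over $P$ (a function $P\to\mathbb N$); sets of places are identified with bags of multiplicity one, $+,-,\le$ are pointwise, and $k.m$ is the sum of $k$ copies of $m$. Transition $t$ is enabled at $m$ iff $\bullet t\le m$, firing gives $m-\bullet t+t\bullet$, and $m\xrightarrow{*}m'$ denotes reachability by a finite (possibly empty) firing sequence. Workflow nets. A pWF net is $(P,T,F,I,O)$ with $(P,T,F)$ a Petri net, $I,O\subseteq P$ non-empty, every node reachable by a directed path from some node of $I$, and some node of $O$ reachable from every node. A tWF net is the same with $I,O$ non-empty subsets of $T$. Input nodes may have incoming edges and output nodes outgoing edges. A WF net is a pWF or tWF net. The place-completion $\mathrm{pc}(N)$ of a tWF net $N=(P,T,F,I,O)$ is obtained by adding two fresh places $p_i,p_o$ with edges $(p_i,t)$ for all $t\in I$ and $(t,p_o)$ for all $t\in O$, and taking input set $\{p_i\}$ and output set $\{p_o\}$. Sub-soundness. A pWF net is sub-sound if for all integers $k\ge k'\ge 0$ and every marking $m'$: if $k.I\xrightarrow{*}m'+k'.O$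 then $m'\xrightarrow{*}(k-k').O$. A tWF net is sub-sound iff its place-completion is. Substitution. Let $N=(P,T,F,I,O)$ and $M=(P',T',F',I',O')$ be WF nets with disjoint node sets. If $p\in P$ and $M$ is a pWF net, $N\otimes_p M$ is obtained from $N$ by deleting $p$ and all edges incident to $p$, adding all nodes and edges of $M$, adding an edge $(t,p')$ for each $t\in\bullet_N p$ and each $p'\in I'$, and an edge $(p',t)$ for each $p'\in O'$ and each $t\in p\bullet_N$; its input set is $(I\setminus\{p\})\cup I'$ if $p\in I$ and $I$ otherwise, and its output set is $(O\setminus\{p\})\cup O'$ if $p\in O$ and $O$ otherwise. If $t\in T$ and $M$ is a tWF net, $N\otimes_t M$ is defined analogously: delete $t$ and its edges, add $M$, add $(q,t')$ for each $q\in\bullet_N t$, $t'\in I'$, and $(t',q)$ for each $t'\in O'$, $q\in t\bullet_N$, with input/output sets updated in the same way. *)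

(* Defs.v *)
From HB Require Import structures.
From mathcomp Require Import all_boot.
Set Implicit Arguments.
Unset Strict Implicit.
Unset Printing Implicit Defensive.

(* Nodes of all nets live in a common finite universe V; a net is given by
   its (finite) place and transition sets, its flow relation and its
   input/output sets. *)
Record wfnet (V : finType) := WFNet {
  pl : {set V};
  tr : {set V};
  fl : rel V;
  inp : {set V};
  outp : {set V}
}.

Definition nodes (V : finType) (N : wfnet V) : {set V} := pl N :|: tr N.

Definition is_petri (V : finType) (N : wfnet V) : Prop :=
  pl N :&: tr N = set0 /\
  (forall x y, fl N x y ->
     (x \in pl N /\ y \in tr N) \/ (x \in tr N /\ y \in pl N)).

Definition wf_connected (V : finType) (N : wfnet V) : Prop :=
  (forall x, x \in nodes N -> exists2 i, i \in inp N & connect (fl N) i x) /\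
  (forall x, x \in nodes N -> exists2 o, o \in outp N & connect (fl N) x o).

Definition is_pWF (V : finType) (N : wfnet V) : Prop :=
  is_petri N /\ inp N != set0 /\ outp N != set0 /\
  inp N \subset pl N /\ outp N \subset pl N /\ wf_connected N.

Definition is_tWF (V : finType) (N : wfnet V) : Prop :=
  is_petri N /\ inp N != set0 /\ outp N != set0 /\
  inp N \subset tr N /\ outp N \subset tr N /\ wf_connected N.

Definition is_WF (V : finType) (N : wfnet V) : Prop := is_pWF N \/ is_tWF N.

(* Markings: multisets of nodes (only places ever carry tokens). *)
Definition marking (V : finType) := V -> nat.

Definition step (V : finType) (N : wfnet V) (m m' : marking V) : Prop :=
  exists2 t, t \in tr N &
    (forall v, (fl N v t : nat) <= m v) /\
    (forall v, m' v = m v - (fl N v t : nat) + (fl N t v : nat)).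

Inductive reach (V : finType) (N : wfnet V) : marking V -> marking V -> Prop :=
| reach_refl m m' : (forall v, m v = m' v) -> reach N m m'
| reach_step m m1 m' : step N m m1 -> reach N m1 m' -> reach N m m'.

Definition kset (V : finType) (k : nat) (S : {set V}) : marking V :=
  fun v => k * (v \in S).

Definition madd (V : finType) (m1 m2 : marking V) : marking V :=
  fun v => m1 v + m2 v.

Definition psub_sound (V : finType) (N : wfnet V) : Prop :=
  forall (k k' : nat) (m' : marking V), k' <= k ->
    reach N (kset k (inp N)) (madd m' (kset k' (outp N))) ->
    reach N m' (kset (k - k') (outp N)).

(* place completion of a tWF net: fresh places p_i = inr false, p_o = inr true *)
Definition pc (V : finType) (N : wfnet V) : wfnet (V + bool)%type :=
  {| pl := [set x | match x with inl v => v \in pl N | inr _ => true end];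
     tr := [set x | match x with inl v => v \in tr N | inr _ => false end];
     fl := fun x y =>
       match x, y with
       | inl a, inl b => fl N a b
       | inr false, inl t => t \in inp N
       | inl t, inr true => t \in outp N
       | _, _ => false
       end;
     inp := [set inr false];
     outp := [set inr true] |}.

Definition sub_sound (V : finType) (N : wfnet V) : Prop :=
  (is_pWF N -> psub_sound N) /\ (is_tWF N -> psub_sound (pc N)).

(* substitution N ⊗_n M (uniform for places and transitions) *)
Definition subst (V : finType) (N : wfnet V) (n : V) (M : wfnet V) : wfnet V :=
  {| pl := (pl N :\ n) :|: pl M;
     tr := (tr N :\ n) :|: tr M;
     fl := fun x y =>
       [|| [&& fl N x y, x != n & y != n],
           fl M x y,
           fl N x n && (y \in inp M)
         | (x \in outp M) && fl N n y];
     inp := if n \in inp N then (inp N :\ n) :|: inp M else inp N;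
     outp := if n \in outp N then (outp N :\ n) :|: outp M else outp N |}.

(* Main.v *)
Require Import Defs.
From HB Require Import structures.
From mathcomp Require Import all_boot.
From mathcomp Require Import zify.
From Stdlib Require Import FunctionalExtensionality.
Set Implicit Arguments.
Unset Strict Implicit.
Unset Printing Implicit Defensive.

Lemma mext (X : finType) (a b : marking X) : (forall v, a v = b v) -> a = b.
Proof. move=> H; exact: functional_extensionality H. Qed.

Lemma reach0 X (N : wfnet X) m : reach N m m.
Proof. by apply: reach_refl. Qed.

Lemma reach_trans X (N : wfnet X) a b c : reach N a b -> reach N b c -> reach N a c.
Proof.
elim=> [m m' E|m m1 m' S _ IH] H.
- by have -> : m = m' by apply: mext.
- exact: reach_step S (IH H).
Qed.

Lemma reach1 X (N : wfnet X) a b : step N a b -> reach N a b.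
Proof. by move=> S; apply: reach_step S (reach0 _ _). Qed.

Lemma reach_sim X Y (A : wfnet X) (B : wfnet Y) (f : marking X -> marking Y) :
  (forall a b, step A a b -> reach B (f a) (f b)) ->
  forall a b, reach A a b -> reach B (f a) (f b).
Proof.
move=> H a b; elim=> [m m' E|m m1 m' S _ IH].
- have -> : m = m' by apply: mext. idtac. exact: reach0.
- exact: reach_trans (H _ _ S) IH.
Qed.

Lemma reach_ind' X (A : wfnet X) (P : marking X -> Prop) :
  (forall a b, step A a b -> P a -> P b) ->
  forall a b, reach A a b -> P a -> P b.
Proof.
move=> H a b; elim=> [m m' E|m m1 m' S _ IH] Pm.
- by have <- : m = m' by apply: mext.
- exact: IH (H _ _ S Pm).
Qed.

Lemma step_madd X (A : wfnet X) a b z : step A a b -> step A (madd a z) (madd b z).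
Proof.
case=> t Ht [H1 H2]; exists t => //; split=> v; rewrite /madd.
- by have := H1 v; lia.
- by rewrite H2; have := H1 v; lia.
Qed.

Lemma reach_madd X (A : wfnet X) a b z : reach A a b -> reach A (madd a z) (madd b z).
Proof.
move=> R.
have H : forall a' b', step A a' b' -> reach A (madd a' z) (madd b' z).
  by move=> a' b' S; apply: reach1; apply: step_madd.
exact: (reach_sim (f := fun m => madd m z) H R).
Qed.

Lemma reach_nonzero X (A : wfnet X) :
  (forall t, t \in tr A -> exists y, fl A t y) ->
  forall a b, reach A a b -> (exists v, 0 < a v) -> exists v, 0 < b v.
Proof.
move=> Hp a b R; apply: (@reach_ind' _ A (fun m => exists v, 0 < m v) _ a b R) => a' b' [t Ht [H1 H2]] _.
have [y Hy] := Hp t Ht; exists y; rewrite H2 Hy; lia.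
Qed.

Lemma kset0 X (S : {set X}) : kset 0 S = fun _ => 0.
Proof. by []. Qed.

Lemma sound_bound X (A : wfnet X) J L mu :
  psub_sound A -> outp A != set0 ->
  (forall t, t \in tr A -> exists y, fl A t y) ->
  reach A (kset J (inp A)) (madd mu (kset L (outp A))) -> L <= J.
Proof.
move=> HS Hne Hp R; rewrite leqNgt; apply/negP => HLJ.
have R' : reach A (kset J (inp A)) (madd (madd mu (kset (L - J) (outp A))) (kset J (outp A))).
  have -> : madd (madd mu (kset (L - J) (outp A))) (kset J (outp A)) = madd mu (kset L (outp A)).
    by apply: mext => v; rewrite /madd /kset; lia.
  exact: R.
have := HS J J _ (leqnn J) R'; rewrite subnn => R2.
have [o Ho] : exists o, o \in outp A by apply/set0Pn.
have Hnz : exists v, 0 < madd mu (kset (L - J) (outp A)) v.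
  by exists o; rewrite /madd /kset Ho; lia.
by have [v] := reach_nonzero Hp R2 Hnz; rewrite /kset.
Qed.

Lemma petri_pt X (N : wfnet X) x : is_petri N -> x \in pl N -> x \in tr N -> False.
Proof.
case=> H _ Hp Ht.
have : x \in pl N :&: tr N by rewrite inE Hp Ht.
by rewrite H inE.
Qed.

Lemma petri_fl X (N : wfnet X) a b : is_petri N -> fl N a b ->
  ((a \in pl N) && (b \in tr N)) || ((a \in tr N) && (b \in pl N)).
Proof. by case=> _ H /H [[-> ->]|[-> ->]]; rewrite ?orbT. Qed.

Lemma petri_nodes X (N : wfnet X) a b : is_petri N -> fl N a b ->
  (a \in nodes N) && (b \in nodes N).
Proof.
move=> P /(petri_fl P); rewrite /nodes !inE.
by case/orP => /andP[-> ->]; rewrite ?orbT.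
Qed.

Lemma petri_ltr X (N : wfnet X) a b : is_petri N -> fl N a b -> a \in tr N -> b \in pl N.
Proof.
move=> P F Ha; move: (petri_fl P F) => /orP[/andP[Hp _]|/andP[_ ->]] //.
by case: (petri_pt P Hp Ha).
Qed.

Lemma petri_lpl X (N : wfnet X) a b : is_petri N -> fl N a b -> a \in pl N -> b \in tr N.
Proof.
move=> P F Ha; move: (petri_fl P F) => /orP[/andP[_ ->]|/andP[Hp _]] //.
by case: (petri_pt P Ha Hp).
Qed.

Lemma petri_rtr X (N : wfnet X) a b : is_petri N -> fl N a b -> b \in tr N -> a \in pl N.
Proof.
move=> P F Hb; move: (petri_fl P F) => /orP[/andP[-> _]|/andP[_ Hp]] //.
by case: (petri_pt P Hp Hb).
Qed.

Lemma petri_rpl X (N : wfnet X) a b : is_petri N -> fl N a b -> b \in pl N -> a \in tr N.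
Proof.
move=> P F Hb; move: (petri_fl P F) => /orP[/andP[_ Hp]|/andP[-> _]] //.
by case: (petri_pt P Hb Hp).
Qed.

Lemma reach_IO X (A : wfnet X) : psub_sound A ->
  reach A (kset 1 (inp A)) (kset 1 (outp A)).
Proof.
move=> HS; have := HS 1 0 (kset 1 (inp A)) (leq0n 1); rewrite subn0; apply.
have -> : madd (kset 1 (inp A)) (kset 0 (outp A)) = kset 1 (inp A).
  by apply: mext => v; rewrite /madd /kset; lia.
exact: reach0.
Qed.

Lemma reach_kIO X (A : wfnet X) (b : bool) : psub_sound A ->
  reach A (kset b (inp A)) (kset b (outp A)).
Proof. by case: b => HS; [exact: reach_IO | exact: reach0]. Qed.

Lemma reach_inert X (A : wfnet X) w :
  (forall t, t \in tr A -> fl A w t = false /\ fl A t w = false) ->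
  forall a b, reach A a b -> a w = b w.
Proof.
move=> H a b R.
apply: (@reach_ind' _ A (fun m => a w = m w) _ a b R) => [a' b' [t Ht [_ H2]] ->|//].
by rewrite H2; case: (H t Ht) => -> ->; lia.
Qed.

Ltac clia := repeat match goal with
 | H : is_true (_ \subset _) |- _ => clear H
 | H : is_true [disjoint _ & _] |- _ => clear H
 | H : is_true (_ != set0) |- _ => clear H end; lia.

Section GP.
Variables (V : finType) (N M : wfnet V) (n : V).
Hypotheses (HpN : is_petri N) (HpM : is_petri M)
  (Hdis : [disjoint nodes N & nodes M]) (HnP : n \in pl N)
  (HiN : inp N \subset nodes N) (HoN : outp N \subset nodes N)
  (HiM : inp M \subset pl M) (HoM : outp M \subset pl M)
  (HoM0 : outp M != set0)
  (HpostM : forall t, t \in tr M -> exists y, fl M t y)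
  (HsN : psub_sound N) (HsM : psub_sound M).

Let C := subst N n M.

Lemma flCE x y : fl C x y = [|| [&& fl N x y, x != n & y != n],
           fl M x y,
           fl N x n && (y \in inp M)
         | (x \in outp M) && fl N n y].
Proof. by []. Qed.

Lemma NnotM x : x \in nodes N -> (x \in nodes M) = false.
Proof. exact: disjointFr. Qed.

Lemma nN : n \in nodes N.
Proof. by rewrite /nodes inE HnP. Qed.
Lemma nM : (n \in nodes M) = false.
Proof. exact: NnotM nN. Qed.

Lemma plM_nodes x : x \in pl M -> x \in nodes M.
Proof. by rewrite /nodes inE => ->. Qed.
Lemma trM_nodes x : x \in tr M -> x \in nodes M.
Proof. by rewrite /nodes inE => ->; rewrite orbT. Qed.
Lemma trN_nodes x : x \in tr N -> x \in nodes N.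
Proof. by rewrite /nodes inE => ->; rewrite orbT. Qed.

Lemma iM x : x \in inp M -> x \in nodes M.
Proof. by move=> H; apply: plM_nodes; apply: (subsetP HiM). Qed.
Lemma oM x : x \in outp M -> x \in nodes M.
Proof. by move=> H; apply: plM_nodes; apply: (subsetP HoM). Qed.

Lemma flN1 x y : fl N x y -> (x \in nodes M) = false.
Proof. by move/(petri_nodes HpN)/andP=> [/NnotM]. Qed.
Lemma flN2 x y : fl N x y -> (y \in nodes M) = false.
Proof. by move/(petri_nodes HpN)/andP=> [_ /NnotM]. Qed.
Lemma flM1 x y : fl M x y -> x \in nodes M.
Proof. by move/(petri_nodes HpM)/andP=> []. Qed.
Lemma flM2 x y : fl M x y -> y \in nodes M.
Proof. by move/(petri_nodes HpM)/andP=> []. Qed.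

Lemma flNnodesM x y : x \in nodes M -> fl N x y = false.
Proof. by move=> H; apply/negP => /flN1; rewrite H. Qed.
Lemma flNnodesM' x y : y \in nodes M -> fl N x y = false.
Proof. by move=> H; apply/negP => /flN2; rewrite H. Qed.
Lemma flMnotM x y : (x \in nodes M) = false -> fl M x y = false.
Proof. by move=> H; apply/negP => /flM1; rewrite H. Qed.
Lemma flMnotM' x y : (y \in nodes M) = false -> fl M x y = false.
Proof. by move=> H; apply/negP => /flM2; rewrite H. Qed.

Lemma trM_notI t : t \in tr M -> (t \in inp M) = false.
Proof.
move=> Ht; apply/negP => /(subsetP HiM) Hp; exact: petri_pt HpM Hp Ht.
Qed.
Lemma trM_notO t : t \in tr M -> (t \in outp M) = false.
Proof.
move=> Ht; apply/negP => /(subsetP HoM) Hp; exact: petri_pt HpM Hp Ht.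
Qed.

Lemma flCM1 t v : t \in tr M -> fl C v t = fl M v t.
Proof.
move=> Ht; have tM := trM_nodes Ht.
by rewrite flCE !(flNnodesM' _ tM) (trM_notI Ht) /= !andbF !orbF.
Qed.
Lemma flCM2 t v : t \in tr M -> fl C t v = fl M t v.
Proof.
move=> Ht; have tM := trM_nodes Ht.
by rewrite flCE !(flNnodesM _ tM) (trM_notO Ht) /= !orbF.
Qed.

Lemma notM_notI v : (v \in nodes M) = false -> (v \in inp M) = false.
Proof. by move=> H; apply/negP => /iM; rewrite H. Qed.
Lemma notM_notO v : (v \in nodes M) = false -> (v \in outp M) = false.
Proof. by move=> H; apply/negP => /oM; rewrite H. Qed.

Lemma flCN1 t v : t \in tr N -> t != n ->
  fl C v t = (fl N v t && (v != n)) || ((v \in outp M) && fl N n t).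
Proof.
move=> Ht Htn; have tM := NnotM (trN_nodes Ht).
rewrite flCE (flMnotM' _ tM) (notM_notI tM) Htn /= andbF andbT.
by case: (fl N v t).
Qed.
Lemma flCN2 t v : t \in tr N -> t != n ->
  fl C t v = (fl N t v && (v != n)) || (fl N t n && (v \in inp M)).
Proof.
move=> Ht Htn; have tM := NnotM (trN_nodes Ht).
rewrite flCE (flMnotM _ tM) (notM_notO tM) Htn /= orbF.
by case: (fl N t v).
Qed.

Lemma flNnn : fl N n n = false.
Proof. by apply/negP => /(petri_lpl HpN) /(_ HnP) H; exact: petri_pt HpN HnP H. Qed.

Lemma flCn1 y : fl C n y = false.
Proof. by rewrite flCE eqxx (flMnotM _ nM) flNnn (notM_notO nM) /= andbF. Qed.
Lemma flCn2 x : fl C x n = false.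
Proof. by rewrite flCE eqxx (flMnotM' _ nM) (notM_notI nM) flNnn /= !andbF. Qed.

Definition piM (m : marking V) : marking V := fun v => if v \in nodes M then m v else 0.
Definition piN (m : marking V) c : marking V :=
  fun v => if v \in nodes M then 0 else if v == n then c else m v.
Definition offM (m : marking V) : marking V := fun v => if v \in nodes M then 0 else m v.

Definition InvP k (m : marking V) := exists j l, l <= j /\
  reach N (kset k (inp N)) (piN m (j - l)) /\
  reach M (kset j (inp M)) (madd (piM m) (kset l (outp M))).

Lemma kset_add (S : {set V}) a b : kset (a + b) S = madd (kset a S) (kset b S).
Proof. by apply: mext => v; rewrite /madd /kset; clia. Qed.

Lemma InvP_step k a b : step C a b -> InvP k a -> InvP k b.
Proof.
move=> [t Ht [H1 H2]] [j [l [Hlj [RN RM]]]].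
rewrite /C /subst /= !inE in Ht; case/orP: Ht => [/andP[Htn HtN] | HtM].
-
  pose mu0 : marking V := fun v => piM a v - (fl N n t && (v \in outp M)).
  have E1 : madd (piM a) (kset l (outp M)) = madd mu0 (kset (l + fl N n t) (outp M)).
    apply: mext => v; rewrite /madd /kset /mu0 /piM.
    have := H1 v; rewrite flCN1 //.
    case vO: (v \in outp M); last by rewrite andbF; clia.
    rewrite (oM vO) /=; case: (fl N n t); rewrite /= ?orbT; clia.
  rewrite E1 in RM.
  have Hb : l + fl N n t <= j.
    apply: (sound_bound HsM HoM0 HpostM RM).
  exists (j + fl N t n), (l + fl N n t); split; first clia.
  split.
  + apply: (reach_trans RN); apply: reach1; exists t => //; split => v;
      rewrite /piN; case vM: (v \in nodes M).
    * by rewrite flNnodesM.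
    * case: eqP => [->|/eqP vn]; first clia.
      by have := H1 v; rewrite flCN1 // vn /= andbT; case: (fl N v t) => //=; clia.
    * by rewrite flNnodesM // flNnodesM'.
    * case: eqP => [->|/eqP vn]; first clia.
      rewrite H2 flCN1 // flCN2 // vn (notM_notO vM) (notM_notI vM) /= !andbT !andbF !orbF.
      by [].
  + have RM2 := reach_madd (kset (fl N t n) (inp M)) RM.
    rewrite -kset_add in RM2.
    suff <- : madd (madd mu0 (kset (l + fl N n t) (outp M))) (kset (fl N t n) (inp M)) =
              madd (piM b) (kset (l + fl N n t) (outp M)) by [].
    apply: mext => v; rewrite /madd /kset /mu0 /piM.
    case vM: (v \in nodes M); last by rewrite (notM_notO vM) (notM_notI vM); clia.
    have := H1 v; rewrite H2 flCN1 // flCN2 // !(flNnodesM _ vM) !(flNnodesM' _ vM) /=.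
    case: (fl N n t); case: (fl N t n); case: (v \in outp M); case: (v \in inp M) => /=; clia.
-
  exists j, l; split => //; split.
  + suff -> : piN b (j - l) = piN a (j - l) by [].
    apply: mext => v; rewrite /piN; case vM: (v \in nodes M) => //.
    case: eqP => // _; rewrite H2 flCM1 // flCM2 // !(flMnotM _ vM) !(flMnotM' _ vM); clia.
  + apply: (reach_trans RM); apply: reach1; exists t => //; split => v;
      rewrite /madd /piM; case vM: (v \in nodes M).
    * by have := H1 v; rewrite flCM1 //; clia.
    * by rewrite (flMnotM _ vM).
    * by rewrite H2 flCM1 // flCM2 //; have := H1 v; rewrite flCM1 //; clia.
    * by rewrite (flMnotM _ vM) (flMnotM' _ vM); clia.
Qed.

Lemma InvP_init k : InvP k (kset k (inp C)).
Proof.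
rewrite /C /subst /=; case Hn: (n \in inp N).
- exists k, 0; split => //; split.
  + suff -> : piN (kset k (inp N :\ n :|: inp M)) (k - 0) = kset k (inp N) by apply: reach0.
    apply: mext => v; rewrite /piN /kset; case vM: (v \in nodes M).
    * suff -> : (v \in inp N) = false by clia.
      by apply/negP => /(subsetP HiN) /NnotM; rewrite vM.
    * case: eqP => [->|/eqP vn]; first by rewrite Hn; clia.
      by rewrite !inE (notM_notI vM) vn /= orbF.
  + suff -> : madd (piM (kset k (inp N :\ n :|: inp M))) (kset 0 (outp M)) = kset k (inp M)
      by apply: reach0.
    apply: mext => v; rewrite /madd /piM /kset; case vM: (v \in nodes M).
    * rewrite !inE; suff -> : (v \in inp N) = false by rewrite andbF /=; clia.
      by apply/negP => /(subsetP HiN) /NnotM; rewrite vM.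
    * by rewrite (notM_notI vM); clia.
- exists 0, 0; split => //; split.
  + suff -> : piN (kset k (inp N)) (0 - 0) = kset k (inp N) by apply: reach0.
    apply: mext => v; rewrite /piN /kset; case vM: (v \in nodes M).
    * suff -> : (v \in inp N) = false by clia.
      by apply/negP => /(subsetP HiN) /NnotM; rewrite vM.
    * by case: eqP => [->|//]; rewrite Hn; clia.
  + suff -> : madd (piM (kset k (inp N))) (kset 0 (outp M)) = kset 0 (inp M)
      by apply: reach0.
    apply: mext => v; rewrite /madd /piM /kset; case vM: (v \in nodes M) => //.
    suff -> : (v \in inp N) = false by clia.
    by apply/negP => /(subsetP HiN) /NnotM; rewrite vM.
Qed.

Lemma liftMC x y z : step M x y -> step C (madd z x) (madd z y).
Proof.
move=> [t Ht [H1 H2]]; exists t; first by rewrite /C /subst /= inE Ht orbT.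
split => v; rewrite /madd flCM1 // ?flCM2 //.
- by have := H1 v; clia.
- by rewrite H2; have := H1 v; clia.
Qed.

Lemma liftMCr x y z : reach M x y -> reach C (madd z x) (madd z y).
Proof.
move=> R.
have H : forall a' b', step M a' b' -> reach C (madd z a') (madd z b').
  by move=> a' b' S; apply: reach1; apply: liftMC.
exact: (reach_sim (f := fun m => madd z m) H R).
Qed.

Definition gN (x : marking V) : marking V := fun v =>
  if v \in nodes M then x n * (v \in outp M) else if v == n then 0 else x v.

Lemma simN x y : step N x y -> reach C (gN x) (gN y).
Proof.
move=> [t Ht [H1 H2]].
have Htn : t != n by apply/eqP => E; subst t; exact: petri_pt HpN HnP Ht.
pose z : marking V := fun v =>
  if v \in nodes M then (x n - fl N n t) * (v \in outp M) else if v == n then 0 else y v.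
apply: (@reach_trans _ _ _ (madd z (kset (fl N t n) (inp M)))).
  apply: reach1; exists t; first by rewrite /C /subst /= !inE Htn Ht.
  split => v; rewrite /gN /madd /z /kset; case vM: (v \in nodes M).
  - rewrite flCN1 // (flNnodesM _ vM) /=; have := H1 n.
    case: (v \in outp M); case: (fl N n t) => /=; clia.
  - by case: eqP => [->|/eqP vn]; [rewrite flCn1 | rewrite flCN1 // vn (notM_notO vM) /= andbT orbF; have := H1 v; case: (fl N v t) => /=; clia].
  - rewrite flCN1 // flCN2 // (flNnodesM _ vM) (flNnodesM' _ vM) /=; have := H1 n.
    case: (v \in outp M); case: (fl N n t); case: (v \in inp M); case: (fl N t n) => /=; clia.
  - case: eqP => [->|/eqP vn]; first by rewrite flCn1 flCn2 (notM_notI nM); clia.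
    rewrite flCN1 // flCN2 // vn (notM_notO vM) (notM_notI vM) /= !andbT !andbF !orbF H2.
    by clia.
apply: (@reach_trans _ _ _ (madd z (kset (fl N t n) (outp M)))).
  exact/liftMCr/reach_kIO.
suff -> : madd z (kset (fl N t n) (outp M)) = gN y by apply: reach0.
apply: mext => v; rewrite /madd /z /kset /gN; case vM: (v \in nodes M).
- rewrite H2; have := H1 n.
  case: (v \in outp M); case: (fl N n t); case: (fl N t n) => /=; clia.
- case: eqP => [->|/eqP vn]; last by rewrite (notM_notO vM); clia.
  by rewrite (notM_notO nM); clia.
Qed.

Lemma reachC_n a b : reach C a b -> a n = b n.
Proof. by apply: reach_inert => t _; rewrite flCn1 flCn2. Qed.

Theorem GP_sound : psub_sound C.
Proof.
move=> k k' m' Hk R.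
have Hm'n : m' n = 0.
  have := reachC_n R; rewrite /madd /kset /C /subst /=.
  have -> : (n \in (if n \in inp N then inp N :\ n :|: inp M else inp N)) = false.
    by case: ifP => Hn; rewrite ?inE ?eqxx ?(notM_notI nM) ?Hn.
  clia.
have [j [l [Hlj [RN RM]]]] := reach_ind' (@InvP_step k) R (InvP_init k).
pose e := k' * (n \in outp N).
pose OC := outp C.
have OCE v : (v \in nodes M) = false -> v != n -> (v \in OC) = (v \in outp N).
  move=> vM vn; rewrite /OC /C /subst /=; case: ifP => // _.
  by rewrite !inE vn (notM_notO vM) orbF.
have OCM v : v \in nodes M -> (v \in OC) = (n \in outp N) && (v \in outp M).
  move=> vM; rewrite /OC /C /subst /=.
  have vN : (v \in outp N) = false.
    by apply/negP => /(subsetP HoN) /NnotM; rewrite vM.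
  by case: ifP => Hn; rewrite ?inE vN ?andbF.
have OCn : (n \in OC) = false.
  rewrite /OC /C /subst /=; case: ifP => Hn; rewrite ?inE ?eqxx ?(notM_notO nM) //.
have EM : madd (piM (madd m' (kset k' OC))) (kset l (outp M)) =
          madd (piM m') (kset (l + e) (outp M)).
  apply: mext => v; rewrite /madd /piM /kset /e; case vM: (v \in nodes M); last by rewrite (notM_notO vM); clia.
  rewrite OCM //; case: (n \in outp N); case: (v \in outp M) => /=; clia.
rewrite EM in RM.
have Hle : l + e <= j := sound_bound HsM HoM0 HpostM RM.
have RM2 : reach M (piM m') (kset (j - (l + e)) (outp M)) := HsM Hle RM.
have EN : piN (madd m' (kset k' OC)) (j - l) =
          madd (piN m' (j - (l + e))) (kset k' (outp N)).
  apply: mext => v; rewrite /madd /piN /kset; case vM: (v \in nodes M).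
  - suff -> : (v \in outp N) = false by clia.
    by apply/negP => /(subsetP HoN) /NnotM; rewrite vM.
  - case: eqP => [->|/eqP vn]; first by rewrite /e in Hle *; clia.
    by rewrite OCE.
rewrite EN in RN.
have RN2 := HsN Hk RN.
have R1 : reach C m' (madd (offM m') (kset (j - (l + e)) (outp M))).
  have Em : m' = madd (offM m') (piM m').
    by apply: mext => v; rewrite /madd /offM /piM; case: (v \in nodes M); clia.
  rewrite {1}Em; exact: liftMCr.
have R2 := reach_sim simN RN2.
apply: (reach_trans R1).
have -> : madd (offM m') (kset (j - (l + e)) (outp M)) = gN (piN m' (j - (l + e))).
  apply: mext => v; rewrite /madd /offM /kset /gN /piN nM eqxx.
  case vM: (v \in nodes M); first by clia.
  case: eqP => [E|_]; first by rewrite E Hm'n (notM_notO nM); clia.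
  by rewrite (notM_notO vM); clia.
suff -> : kset (k - k') (outp C) = gN (kset (k - k') (outp N)) by [].
apply: mext => v; rewrite /kset /gN -/OC; case vM: (v \in nodes M).
- by rewrite OCM //; case: (n \in outp N); case: (v \in outp M) => /=; clia.
- case: eqP => [->|/eqP vn]; first by rewrite OCn; clia.
  by rewrite OCE.
Qed.

End GP.

Section GT.
Variables (V : finType) (N M : wfnet V) (n : V).
Hypotheses (HpN : is_petri N) (HpM : is_petri M)
  (Hdis : [disjoint nodes N & nodes M]) (HnT : n \in tr N)
  (HnI : n \notin inp N) (HnO : n \notin outp N)
  (HiN : inp N \subset nodes N) (HoN : outp N \subset nodes N)
  (HiM : inp M \subset tr M) (HoM : outp M \subset tr M)
  (HpostM : forall t, t \in tr (pc M) -> exists y, fl (pc M) t y)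
  (HsN : psub_sound N) (HsM : psub_sound (pc M)).

Let C := subst N n M.

Lemma flCE' x y : fl C x y = [|| [&& fl N x y, x != n & y != n],
           fl M x y,
           fl N x n && (y \in inp M)
         | (x \in outp M) && fl N n y].
Proof. by []. Qed.

Lemma NnotMT x : x \in nodes N -> (x \in nodes M) = false.
Proof. exact: disjointFr. Qed.
Lemma nNT : n \in nodes N.
Proof. by rewrite /nodes inE HnT orbT. Qed.
Lemma nMT : (n \in nodes M) = false.
Proof. exact: NnotMT nNT. Qed.
Lemma trM_nodesT x : x \in tr M -> x \in nodes M.
Proof. by rewrite /nodes inE => ->; rewrite orbT. Qed.
Lemma trN_nodesT x : x \in tr N -> x \in nodes N.
Proof. by rewrite /nodes inE => ->; rewrite orbT. Qed.
Lemma iMT x : x \in inp M -> x \in nodes M.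
Proof. by move=> H; apply: trM_nodesT; apply: (subsetP HiM). Qed.
Lemma oMT x : x \in outp M -> x \in nodes M.
Proof. by move=> H; apply: trM_nodesT; apply: (subsetP HoM). Qed.
Lemma flNnodesMT x y : x \in nodes M -> fl N x y = false.
Proof.
by move=> H; apply/negP => /(petri_nodes HpN)/andP[/NnotMT]; rewrite H.
Qed.
Lemma flNnodesM'T x y : y \in nodes M -> fl N x y = false.
Proof.
by move=> H; apply/negP => /(petri_nodes HpN)/andP[_ /NnotMT]; rewrite H.
Qed.
Lemma flMnotMT x y : (x \in nodes M) = false -> fl M x y = false.
Proof. by move=> H; apply/negP => /(petri_nodes HpM)/andP[]; rewrite H. Qed.
Lemma flMnotM'T x y : (y \in nodes M) = false -> fl M x y = false.
Proof. by move=> H; apply/negP => /(petri_nodes HpM)/andP[_]; rewrite H. Qed.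
Lemma notM_notIT v : (v \in nodes M) = false -> (v \in inp M) = false.
Proof. by move=> H; apply/negP => /iMT; rewrite H. Qed.
Lemma notM_notOT v : (v \in nodes M) = false -> (v \in outp M) = false.
Proof. by move=> H; apply/negP => /oMT; rewrite H. Qed.
Lemma flNttT t : t \in tr N -> fl N n t = false.
Proof. by move=> Ht; apply/negP => /(petri_rtr HpN) /(_ Ht) Hp; exact: petri_pt HpN Hp HnT. Qed.
Lemma flNtt'T t : t \in tr N -> fl N t n = false.
Proof. by move=> Ht; apply/negP => /(petri_ltr HpN) /(_ Ht) Hp; exact: petri_pt HpN Hp HnT. Qed.

Lemma flCM1' t v : t \in tr M ->
  fl C v t = fl M v t || (fl N v n && (t \in inp M)).
Proof.
move=> Ht; have tM := trM_nodesT Ht.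
by rewrite flCE' !(flNnodesM'T _ tM) /= !andbF orbF.
Qed.
Lemma flCM2' t v : t \in tr M ->
  fl C t v = fl M t v || ((t \in outp M) && fl N n v).
Proof.
move=> Ht; have tM := trM_nodesT Ht.
by rewrite flCE' !(flNnodesMT _ tM) /=.
Qed.
Lemma flCN1' t v : t \in tr N -> t != n -> fl C v t = fl N v t.
Proof.
move=> Ht Htn; have tM := NnotMT (trN_nodesT Ht).
rewrite flCE' (flMnotM'T _ tM) (notM_notIT tM) (flNttT Ht) Htn /= !andbF !orbF andbT.
case F: (fl N v t) => //=; apply/eqP => E; subst v.
by rewrite (flNttT Ht) in F.
Qed.
Lemma flCN2' t v : t \in tr N -> t != n -> fl C t v = fl N t v.
Proof.
move=> Ht Htn; have tM := NnotMT (trN_nodesT Ht).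
rewrite flCE' (flMnotMT _ tM) (notM_notOT tM) (flNtt'T Ht) Htn /= !orbF.
case F: (fl N t v) => //=; apply/eqP => E; subst v.
by rewrite (flNtt'T Ht) in F.
Qed.

Definition pI : {set (V + bool)%type} := [set inr false].
Definition pO : {set (V + bool)%type} := [set inr true].
Definition hat (m : marking V) : marking (V + bool)%type := fun x =>
  match x with inl v => if v \in nodes M then m v else 0 | inr _ => 0 end.
Definition piNT (m : marking V) c : marking V := fun v =>
  if v \in nodes M then 0 else m v + c * fl N v n.

Definition InvT k (m : marking V) := exists j l, l <= j /\
  reach N (kset k (inp N)) (piNT m (j - l)) /\
  reach (pc M) (kset j pI) (madd (hat m) (kset l pO)).

Lemma kset_addT X (S : {set X}) a b : kset (a + b) S = madd (kset a S) (kset b S).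
Proof. by apply: mext => v; rewrite /madd /kset; clia. Qed.

Lemma InvT_step k a b : step C a b -> InvT k a -> InvT k b.
Proof.
move=> [t Ht [H1 H2]] [j [l [Hlj [RN RM]]]].
rewrite /C /subst /= !inE in Ht; case/orP: Ht => [/andP[Htn HtN] | HtM].
-
  exists j, l; split => //; split.
  + apply: (reach_trans RN); apply: reach1; exists t => //; split => v;
      rewrite /piNT; case vM: (v \in nodes M).
    * by rewrite flNnodesMT.
    * by have := H1 v; rewrite flCN1' //; clia.
    * by rewrite flNnodesMT // flNnodesM'T.
    * by rewrite H2 flCN1' // flCN2' //; have := H1 v; rewrite flCN1' //; clia.
  + suff -> : hat b = hat a by [].
    apply: mext => [[v|//]]; rewrite /hat; case vM: (v \in nodes M) => //.
    by rewrite H2 flCN1' // flCN2' // flNnodesMT // flNnodesM'T; clia.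
-
  have RM1 := reach_madd (kset (t \in inp M) pI) RM; rewrite -kset_addT in RM1.
  have S1 : step (pc M) (madd (madd (hat a) (kset l pO)) (kset (t \in inp M) pI))
                 (madd (hat b) (kset (l + (t \in outp M)) pO)).
    exists (inl t); first by rewrite /pc inE.
    split => [[v|[]]|[v|[]]]; rewrite /madd /hat /kset /pI /pO !in_set1 /=.
    + case vM: (v \in nodes M); last by rewrite flMnotMT.
      by have := H1 v; rewrite flCM1' //; case: (fl M v t) => /=; clia.
    + by clia.
    + by clia.
    + case vM: (v \in nodes M); last by rewrite flMnotMT // flMnotM'T //; clia.
      rewrite H2 flCM1' // flCM2' // flNnodesMT // flNnodesM'T // !andbF !orbF.
      by have := H1 v; rewrite flCM1' // flNnodesMT //= orbF; clia.
    + by clia.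
    + by clia.
  have RM2 := reach_trans RM1 (reach1 S1).
  have Hb : l + (t \in outp M) <= j + (t \in inp M).
    apply: (sound_bound HsM _ HpostM RM2).
    by apply/set0Pn; exists (inr true); rewrite /pc inE.
  exists (j + (t \in inp M)), (l + (t \in outp M)); split => //; split => //.
  case Hbo: (t \in outp M).
  + apply: (reach_trans RN); apply: reach1; exists n => //; split => v;
      rewrite /piNT; case vM: (v \in nodes M).
    * by rewrite flNnodesMT.
    * move: Hb; rewrite Hbo; have := H1 v; rewrite flCM1' // flMnotMT //=.
      by case: (fl N v n); case: (t \in inp M) => /=; clia.
    * by rewrite flNnodesMT // flNnodesM'T.
    * move: Hb; rewrite Hbo H2 flCM1' // flCM2' // flMnotMT // flMnotM'T // Hbo /=.
      have := H1 v; rewrite flCM1' // flMnotMT //=.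
      by case: (fl N v n); case: (fl N n v); case: (t \in inp M) => /=; clia.
  + suff -> : piNT b (j + (t \in inp M) - (l + false)) = piNT a (j - l) by [].
    apply: mext => v; rewrite /piNT; case vM: (v \in nodes M) => //.
    rewrite H2 flCM1' // flCM2' // flMnotMT // flMnotM'T // Hbo /=.
    have := H1 v; rewrite flCM1' // flMnotMT //=.
    by case: (fl N v n); case: (t \in inp M) => /=; clia.
Qed.

Lemma IC : inp C = inp N.
Proof. by rewrite /C /subst /= (negbTE HnI). Qed.
Lemma OC : outp C = outp N.
Proof. by rewrite /C /subst /= (negbTE HnO). Qed.

Lemma iNMT v : v \in nodes M -> (v \in inp N) = false.
Proof. by move=> vM; apply/negP => /(subsetP HiN) /NnotMT; rewrite vM. Qed.
Lemma oNMT v : v \in nodes M -> (v \in outp N) = false.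
Proof. by move=> vM; apply/negP => /(subsetP HoN) /NnotMT; rewrite vM. Qed.

Lemma InvT_init k : InvT k (kset k (inp C)).
Proof.
rewrite IC; exists 0, 0; split => //; split.
- suff -> : piNT (kset k (inp N)) (0 - 0) = kset k (inp N) by apply: reach0.
  apply: mext => v; rewrite /piNT /kset; case vM: (v \in nodes M); last by clia.
  by rewrite iNMT //; clia.
- suff -> : madd (hat (kset k (inp N))) (kset 0 pO) = kset 0 pI by apply: reach0.
  apply: mext => [[v|b]]; rewrite /madd /hat /kset; last by clia.
  case vM: (v \in nodes M); last by clia.
  by rewrite iNMT //; clia.
Qed.

Definition fM (z : marking V) (x : marking (V + bool)%type) : marking V := fun v =>
  (if v \in nodes M then x (inl v) else z v) + x (inr false) * fl N v n
  + x (inr true) * fl N n v.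

Lemma liftPC z x y : step (pc M) x y -> step C (fM z x) (fM z y).
Proof.
move=> [tt Htt [H1 H2]]; case: tt Htt H1 H2 => [t|b] Htt H1 H2; last by move: Htt; rewrite /pc inE.
have Ht : t \in tr M by move: Htt; rewrite /pc inE.
exists t; first by rewrite /C /subst /= inE Ht orbT.
split => v; rewrite /fM flCM1' // ?flCM2' //.
- case vM: (v \in nodes M).
  + by rewrite flNnodesMT // flNnodesM'T //= orbF; have := H1 (inl v); rewrite /=; clia.
  + rewrite flMnotMT //=; have := H1 (inr false); rewrite /=.
    by case: (fl N v n); case: (t \in inp M) => /=; clia.
- rewrite !H2 /=; case vM: (v \in nodes M).
  + rewrite flNnodesMT // flNnodesM'T //= !orbF !andbF; have := H1 (inl v); rewrite /=; clia.
  + rewrite flMnotMT // flMnotM'T //=; have := H1 (inr false); rewrite /=.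
    by case: (fl N v n); case: (fl N n v); case: (t \in inp M); case: (t \in outp M) => /=; clia.
Qed.

Lemma liftPCr z x y : reach (pc M) x y -> reach C (fM z x) (fM z y).
Proof.
move=> R.
have H : forall a' b', step (pc M) a' b' -> reach C (fM z a') (fM z b').
  by move=> a' b' S; apply: reach1; apply: liftPC.
exact: (reach_sim (f := fM z) H R).
Qed.

Definition gT (x : marking V) : marking V := fun v => if v \in nodes M then 0 else x v.

Lemma simNT x y : step N x y -> reach C (gT x) (gT y).
Proof.
move=> [t Ht [H1 H2]].
case: (eqVneq t n) => [Etn|Htn].
- subst t.
  pose z : marking V := fun v => x v - fl N v n.
  have E1 : fM z (kset 1 pI) = gT x.
    apply: mext => v; rewrite /fM /z /gT /kset /pI !in_set1 /=.
    case vM: (v \in nodes M); first by rewrite flNnodesMT // flNnodesM'T; clia.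
    by have := H1 v; clia.
  have E2 : fM z (kset 1 pO) = gT y.
    apply: mext => v; rewrite /fM /z /gT /kset /pO !in_set1 /=.
    case vM: (v \in nodes M); first by rewrite flNnodesMT // flNnodesM'T; clia.
    by rewrite H2; have := H1 v; clia.
  rewrite -E1 -E2; apply: liftPCr.
  exact: (reach_IO HsM).
- apply: reach1; exists t; first by rewrite /C /subst /= !inE Htn Ht.
  split => v; rewrite /gT flCN1' // ?flCN2' //; case vM: (v \in nodes M).
  + by rewrite flNnodesMT.
  + exact: H1.
  + by rewrite flNnodesMT // flNnodesM'T.
  + exact: H2.
Qed.

Definition preN c : marking V := fun v => c * fl N v n.
Definition postN c : marking V := fun v => c * fl N n v.

Lemma fire_n c : forall Y, reach N (madd Y (preN c)) (madd Y (postN c)).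
Proof.
elim: c => [|c IH] Y.
  suff -> : madd Y (preN 0) = madd Y (postN 0) by apply: reach0.
  by apply: mext => v; rewrite /madd /preN /postN; clia.
apply: (@reach_trans _ _ _ (madd (madd Y (postN 1)) (preN c))).
  apply: reach1; exists n => //; split => v; rewrite /madd /preN /postN; clia.
suff -> : madd Y (postN c.+1) = madd (madd Y (postN 1)) (postN c) by apply: IH.
by apply: mext => v; rewrite /madd /postN; clia.
Qed.

Theorem GT_sound : psub_sound C.
Proof.
move=> k k' m' Hk R.
have [j [l [Hlj [RN RM]]]] := reach_ind' (@InvT_step k) R (InvT_init k).
rewrite OC in RN RM.
have EH : hat (madd m' (kset k' (outp N))) = hat m'.
  apply: mext => [[v|//]]; rewrite /hat /madd /kset.
  by case vM: (v \in nodes M) => //; rewrite oNMT //; clia.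
rewrite EH in RM.
have RM2 : reach (pc M) (hat m') (kset (j - l) pO) := HsM Hlj RM.
have EN : piNT (madd m' (kset k' (outp N))) (j - l) =
          madd (madd (gT m') (preN (j - l))) (kset k' (outp N)).
  apply: mext => v; rewrite /piNT /madd /gT /preN /kset.
  case vM: (v \in nodes M); last by clia.
  by rewrite oNMT // flNnodesMT //; clia.
rewrite EN in RN.
have RN1 := reach_trans RN (reach_madd (kset k' (outp N)) (fire_n (j - l) (gT m'))).
have RN2 := HsN Hk RN1.
have R1 : reach C (fM m' (hat m')) (fM m' (kset (j - l) pO)) := liftPCr m' RM2.
have E1 : fM m' (hat m') = m'.
  apply: mext => v; rewrite /fM /hat; case: (v \in nodes M); clia.
have E2 : fM m' (kset (j - l) pO) = gT (madd (gT m') (postN (j - l))).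
  apply: mext => v; rewrite /fM /gT /madd /kset /pO /postN !in_set1 /=.
  case vM: (v \in nodes M); last by clia.
  by rewrite flNnodesMT // flNnodesM'T //; clia.
rewrite E1 E2 in R1.
apply: (reach_trans R1).
have R2 := reach_sim simNT RN2.
suff -> : kset (k - k') (outp C) = gT (kset (k - k') (outp N)) by [].
apply: mext => v; rewrite OC /gT /kset; case vM: (v \in nodes M) => //.
by rewrite oNMT //; clia.
Qed.
End GT.

Lemma petri_noloop X (N : wfnet X) x : is_petri N -> fl N x x = false.
Proof.
move=> P; apply/negP => F; move: (petri_fl P F) => /orP[] /andP[H1 H2].
  exact: petri_pt P H1 H2.
exact: petri_pt P H2 H1.
Qed.

Lemma first_step X (N : wfnet X) a x : connect (fl N) a x -> x != a ->
  exists2 z, fl N a z & connect (fl N) z x.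
Proof.
move/connectP => [[|z p] /= Hp ->]; first by rewrite eqxx.
move: Hp => /andP[H1 H2] _; exists z => //; apply/connectP; by exists p.
Qed.

Lemma last_step X (N : wfnet X) a x : connect (fl N) a x -> a != x ->
  exists p, [/\ connect (fl N) a p, fl N p x & p != x].
Proof.
move/connectP => [p]; elim: p a => [|y p IH] a /=; first by move=> _ ->; rewrite eqxx.
move=> /andP[Hay Hp] Hx Hax.
case: (eqVneq y x) => [Eyx|Hyx].
  by exists a; split => //; rewrite -Eyx.
have [q [Cq Fq Nq]] := IH y Hp Hx Hyx.
exists q; split => //; exact: connect_trans (connect1 Hay) Cq.
Qed.

Section WF.
Variables (V : finType) (N M : wfnet V) (n : V).
Hypotheses (HpN : is_petri N) (HpM : is_petri M)
  (Hdis : [disjoint nodes N & nodes M]) (HnN : n \in nodes N)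
  (Hkind : (n \in pl N /\ inp M \subset pl M /\ outp M \subset pl M) \/
           (n \in tr N /\ inp M \subset tr M /\ outp M \subset tr M))
  (HcN : wf_connected N) (HcM : wf_connected M)
  (HiM0 : inp M != set0) (HiN : inp N \subset nodes N) (HoN : outp N \subset nodes N).

Let C := subst N n M.

Lemma W_NnotM x : x \in nodes N -> (x \in nodes M) = false.
Proof. exact: disjointFr. Qed.

Lemma W_iM x : x \in inp M -> x \in nodes M.
Proof.
by case: Hkind => [[_ [H _]]|[_ [H _]]] /(subsetP H); rewrite /nodes inE => ->; rewrite ?orbT.
Qed.
Lemma W_oM x : x \in outp M -> x \in nodes M.
Proof.
by case: Hkind => [[_ [_ H]]|[_ [_ H]]] /(subsetP H); rewrite /nodes inE => ->; rewrite ?orbT.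
Qed.

Lemma W_Mpath : exists i, exists o, [/\ i \in inp M, o \in outp M & connect (fl M) i o].
Proof.
have [i Hi] := set0Pn _ HiM0.
have [o Ho Co] := HcM.2 i (W_iM Hi).
by exists i, o.
Qed.

Lemma W_MC a b : connect (fl M) a b -> connect (fl C) a b.
Proof.
apply: connect_sub => x y F; apply: connect1.
by rewrite /C /subst /= F orbT.
Qed.

Lemma W_flnn : fl N n n = false.
Proof. exact: petri_noloop. Qed.

Lemma W_NCaux p : forall a, path (fl N) a p -> last a p != n ->
  (a != n -> connect (fl C) a (last a p)) /\
  (a = n -> forall o, o \in outp M -> connect (fl C) o (last a p)).
Proof.
elim: p => [|y p IH] a /=.
  by move=> _ Hb; split => [_|E]; [exact: connect0 | by rewrite E eqxx in Hb].
move=> /andP[Hay Hp] Hb; have [IH1 IH2] := IH y Hp Hb.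
split.
- move=> Ha; case: (eqVneq y n) => [Eyn|Hyn].
  + have [i [o [Hi Ho Cio]]] := W_Mpath.
    apply: (connect_trans (y := i)).
      by apply: connect1; rewrite /C /subst /= -Eyn Hay Hi /= !orbT.
    apply: (connect_trans (y := o)); first exact: W_MC.
    exact: IH2.
  + apply: (connect_trans (y := y)); last exact: IH1.
    by apply: connect1; rewrite /C /subst /= Hay Ha Hyn.
- move=> Ean o Ho; subst a.
  have Hyn : y != n by apply/eqP => E; subst y; rewrite W_flnn in Hay.
  apply: (connect_trans (y := y)); last exact: IH1.
  by apply: connect1; rewrite /C /subst /= Ho Hay /= !orbT.
Qed.

Lemma W_NC a b : a != n -> b != n -> connect (fl N) a b -> connect (fl C) a b.
Proof.
move=> Ha Hb /connectP [p Hp Eb]; subst b.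
exact: (W_NCaux Hp Hb).1 Ha.
Qed.

Lemma W_nodesC x : x \in nodes C -> (x \in nodes N) && (x != n) || (x \in nodes M).
Proof.
rewrite /C /subst /nodes /= !inE.
by case: (x \in pl N); case: (x \in tr N); case: (x \in pl M); case: (x \in tr M);
  case: (x != n).
Qed.

Lemma W_conn : wf_connected C.
Proof.
split => x /W_nodesC /orP [/andP[xN xn]|xM].
- have [i Hi Ci] := HcN.1 x xN.
  case: (eqVneq i n) => [Ein|Hin].
  + subst i; have [z Hnz Czx] := first_step Ci xn.
    have Hzn : z != n by apply/eqP => E; subst z; rewrite W_flnn in Hnz.
    have [i [o [Hi' Ho Cio]]] := W_Mpath.
    exists i; first by rewrite /C /subst /= Hi !inE Hi' orbT.
    apply: (connect_trans (y := o)); first exact: W_MC.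
    apply: (connect_trans (y := z)).
      by apply: connect1; rewrite /C /subst /= Ho Hnz /= !orbT.
    exact: W_NC.
  + exists i; last exact: W_NC.
    by rewrite /C /subst /=; case: ifP => _; rewrite // !inE Hin Hi.
- have [j Hj Cj] := HcM.1 x xM.
  case Hn: (n \in inp N).
  + exists j; first by rewrite /C /subst /= Hn !inE Hj orbT.
    exact: W_MC.
  + have [i Hi Ci] := HcN.1 n HnN.
    have Hin : i != n by apply/eqP => E; subst i; rewrite Hi in Hn.
    have [p [Cp Fp Np]] := last_step Ci Hin.
    exists i; first by rewrite /C /subst /= Hn.
    apply: (connect_trans (y := p)); first exact: W_NC.
    apply: (connect_trans (y := j)).
      by apply: connect1; rewrite /C /subst /= Fp Hj /= !orbT.
    exact: W_MC.
- have [o Ho Co] := HcN.2 x xN.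
  case: (eqVneq o n) => [Eon|Hon].
  + subst o; have xn' : x != n by [].
    have [p [Cp Fp Np]] := last_step Co xn'.
    have [i [o [Hi' Ho' Cio]]] := W_Mpath.
    exists o; first by rewrite /C /subst /= Ho !inE Ho' orbT.
    apply: (connect_trans (y := p)); first exact: W_NC.
    apply: (connect_trans (y := i)).
      by apply: connect1; rewrite /C /subst /= Fp Hi' /= !orbT.
    exact: W_MC.
  + exists o; last exact: W_NC.
    by rewrite /C /subst /=; case: ifP => _; rewrite // !inE Hon Ho.
- have [j Hj Cj] := HcM.2 x xM.
  case Hn: (n \in outp N).
  + exists j; first by rewrite /C /subst /= Hn !inE Hj orbT.
    exact: W_MC.
  + have [o Ho Co] := HcN.2 n HnN.
    have Hon : o != n by apply/eqP => E; subst o; rewrite Ho in Hn.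
    have [z Fz Cz] := first_step Co Hon.
    have Hzn : z != n by apply/eqP => E; subst z; rewrite W_flnn in Fz.
    exists o; first by rewrite /C /subst /= Hn.
    apply: (connect_trans (y := j)); first exact: W_MC.
    apply: (connect_trans (y := z)).
      by apply: connect1; rewrite /C /subst /= Hj Fz /= !orbT.
    exact: W_NC.
Qed.

Lemma W_petri : is_petri C.
Proof.
split.
- apply/setP => x; rewrite inE in_set0; apply/negP => /andP[H1 H2].
  rewrite /C /subst /= !inE in H1 H2.
  case/orP: H1 => [/andP[_ Hp]|Hp]; case/orP: H2 => [/andP[_ Ht]|Ht].
  + exact: petri_pt HpN Hp Ht.
  + have : x \in nodes N by rewrite /nodes inE Hp.
    by move/W_NnotM; rewrite /nodes inE Ht orbT.
  + have : x \in nodes N by rewrite /nodes inE Ht orbT.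
    by move/W_NnotM; rewrite /nodes inE Hp.
  + exact: petri_pt HpM Hp Ht.
- move=> x y; rewrite /C /subst /= !inE.
  case/or4P.
  + move=> /and3P[F xn yn]; rewrite xn yn /=.
    by case/orP: (petri_fl HpN F) => /andP[-> ->]; [left|right].
  + move=> F.
    by case/orP: (petri_fl HpM F) => /andP[H1 H2]; [left|right]; rewrite H1 H2 !orbT.
  + move=> /andP[F Hy].
    have xn : x != n by apply/eqP => E; subst x; rewrite W_flnn in F.
    case: Hkind => [[Hn [Hi _]]|[Hn [Hi _]]].
    * right; rewrite xn (petri_rpl HpN F Hn) (subsetP Hi _ Hy); by rewrite !orbT.
    * left; rewrite xn (petri_rtr HpN F Hn) (subsetP Hi _ Hy); by rewrite !orbT.
  + move=> /andP[Hx F].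
    have yn : y != n by apply/eqP => E; subst y; rewrite W_flnn in F.
    case: Hkind => [[Hn [_ Ho]]|[Hn [_ Ho]]].
    * left; rewrite yn (petri_lpl HpN F Hn) (subsetP Ho _ Hx); by rewrite !orbT.
    * right; rewrite yn (petri_ltr HpN F Hn) (subsetP Ho _ Hx); by rewrite !orbT.
Qed.

Lemma W_inp0 : inp N != set0 -> inp C != set0.
Proof.
move=> H; rewrite /C /subst /=; case: ifP => // _.
have [i Hi] := set0Pn _ HiM0; apply/set0Pn; exists i; by rewrite !inE Hi orbT.
Qed.

End WF.

Lemma psub_eq X (A B : wfnet X) : tr A = tr B -> fl A =2 fl B ->
  inp A = inp B -> outp A = outp B -> psub_sound A -> psub_sound B.
Proof.
move=> Et Ef Ei Eo HA.
have SAB : forall a b, step B a b -> reach A a b.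
  move=> a b [t Ht [H1 H2]]; apply: reach1; exists t; first by rewrite Et.
  by split => v; rewrite !Ef.
have SBA : forall a b, step A a b -> reach B a b.
  move=> a b [t Ht [H1 H2]]; apply: reach1; exists t; first by rewrite -Et.
  by split => v; rewrite -!Ef.
move=> k k' m' Hk R.
have R' := reach_sim (f := id) SAB R; rewrite /= -Ei -Eo in R'.
have := HA k k' m' Hk R'; rewrite Eo => R2.
exact: (reach_sim (f := id) SBA R2).
Qed.

Section Transport.
Variables (X Y : finType) (A : wfnet X) (B : wfnet Y) (e : X -> Y).
Hypotheses (Hinj : injective e)
  (Htr : forall x, (e x \in tr B) = (x \in tr A))
  (Htr0 : forall y, y \in tr B -> exists x, y = e x)
  (Hfl : forall a b, fl B (e a) (e b) = fl A a b)
  (Hfl0 : forall y y', fl B y y' -> (exists x, y = e x) /\ (exists x, y' = e x))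
  (Hin : forall x, (e x \in inp B) = (x \in inp A))
  (Hin0 : forall y, y \in inp B -> exists x, y = e x)
  (Hout : forall x, (e x \in outp B) = (x \in outp A))
  (Hout0 : forall y, y \in outp B -> exists x, y = e x).

Definition push (a : marking X) (z : marking Y) : marking Y := fun y =>
  match [pick x | e x == y] with Some x => a x | None => z y end.

Lemma push_e a z x : push a z (e x) = a x.
Proof.
rewrite /push; case: pickP => [x' /eqP /Hinj -> //|H].
by have := H x; rewrite eqxx.
Qed.

Lemma push_ne a z y : (forall x, e x != y) -> push a z y = z y.
Proof.
move=> H; rewrite /push; case: pickP => [x' E|//].
by have := H x'; rewrite E.
Qed.

Lemma img_dec y : (exists x, y = e x) \/ (forall x, e x != y).
Proof.
case: (pickP (fun x => e x == y)) => [x /eqP <-|H]; first by left; exists x.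
by right => x; rewrite H.
Qed.

Lemma tr_pull a b : step B a b -> step A (fun x => a (e x)) (fun x => b (e x)).
Proof.
move=> [t Ht [H1 H2]]; have [t0 Et] := Htr0 Ht; subst t.
exists t0; first by rewrite -Htr.
split => v; [rewrite -Hfl; exact: H1 | by rewrite H2 !Hfl].
Qed.

Lemma tr_push a b z : step A a b -> step B (push a z) (push b z).
Proof.
move=> [t Ht [H1 H2]]; exists (e t); first by rewrite Htr.
split => y; case: (img_dec y) => [[x ->]|Hy].
- by rewrite Hfl push_e.
- case F: (fl B y (e t)) => //.
  by have [[x Ex] _] := Hfl0 F; have := Hy x; rewrite Ex eqxx.
- by rewrite !push_e H2 !Hfl.
- rewrite !push_ne //.
  case F1: (fl B y (e t)); first by have [[x Ex] _] := Hfl0 F1; have := Hy x; rewrite Ex eqxx.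
  case F2: (fl B (e t) y); first by have [_ [x Ex]] := Hfl0 F2; have := Hy x; rewrite Ex eqxx.
  by rewrite subn0 addn0.
Qed.

Lemma transport : psub_sound A -> psub_sound B.
Proof.
move=> HA k k' m' Hk R.
have R1 := reach_sim (f := fun m x => m (e x)) (fun a b S => reach1 (tr_pull S)) R.
have E1 : (fun x => kset k (inp B) (e x)) = kset k (inp A).
  by apply: mext => x; rewrite /kset Hin.
have E2 : (fun x => madd m' (kset k' (outp B)) (e x)) =
          madd (fun x => m' (e x)) (kset k' (outp A)).
  by apply: mext => x; rewrite /madd /kset Hout.
rewrite /= E1 E2 in R1.
have R2 := HA k k' _ Hk R1.
have R3 := reach_sim (f := fun m => push m m') (fun a b S => reach1 (tr_push m' S)) R2.
have Hoff : forall y, (forall x, e x != y) -> m' y = 0.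
  move=> y Hy.
  have : kset k (inp B) y = madd m' (kset k' (outp B)) y.
    apply: (reach_inert (A := B)) R => t Ht.
    split; apply/negP => F.
    - by have [[x Ex] _] := Hfl0 F; have := Hy x; rewrite Ex eqxx.
    - by have [_ [x Ex]] := Hfl0 F; have := Hy x; rewrite Ex eqxx.
  rewrite /kset /madd.
  have -> : (y \in inp B) = false.
    by apply/negP => /Hin0 [x Ex]; have := Hy x; rewrite Ex eqxx.
  have -> : (y \in outp B) = false.
    by apply/negP => /Hout0 [x Ex]; have := Hy x; rewrite Ex eqxx.
  lia.
have E3 : push (fun x => m' (e x)) m' = m'.
  apply: mext => y; case: (img_dec y) => [[x ->]|Hy]; first by rewrite push_e.
  by rewrite push_ne.
have E4 : push (kset (k - k') (outp A)) m' = kset (k - k') (outp B).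
  apply: mext => y; case: (img_dec y) => [[x ->]|Hy]; first by rewrite push_e /kset Hout.
  rewrite push_ne // Hoff // /kset.
  have -> : (y \in outp B) = false.
    by apply/negP => /Hout0 [x Ex]; have := Hy x; rewrite Ex eqxx.
  lia.
by rewrite /= E3 E4 in R3.
Qed.

End Transport.

Definition lset (V : finType) (A : {set V}) : {set (V + bool)%type} :=
  [set x | if x is inl v then v \in A else false].

Lemma lsetE (V : finType) (A : {set V}) x :
  (x \in lset A) = (if x is inl v then v \in A else false).
Proof. by rewrite inE. Qed.

Lemma lset_sub (V : finType) (A B : {set V}) : A \subset B -> lset A \subset lset B.
Proof. by move=> H; apply/subsetP => x; rewrite /lset !inE; case: x => // v /(subsetP H). Qed.

Lemma lset0 (V : finType) (A : {set V}) : A != set0 -> lset A != set0.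
Proof. by move=> /set0Pn [v Hv]; apply/set0Pn; exists (inl v); rewrite /lset inE. Qed.

Definition liftN (V : finType) (M : wfnet V) : wfnet (V + bool)%type :=
  {| pl := lset (pl M); tr := lset (tr M);
     fl := fun x y => match x, y with inl a, inl b => fl M a b | _, _ => false end;
     inp := lset (inp M); outp := lset (outp M) |}.

Lemma lift_petri (V : finType) (M : wfnet V) : is_petri M -> is_petri (liftN M).
Proof.
move=> P; split.
- apply/setP => [[v|b]]; rewrite inE in_set0 /= /liftN /lset /= !inE //.
  by apply/negP => /andP[H1 H2]; exact: petri_pt P H1 H2.
- move=> [a|//] [b|//] /= F; rewrite /liftN /lset /= !inE.
  by case/orP: (petri_fl P F) => /andP[-> ->]; [left|right].
Qed.

Lemma lift_post (V : finType) (M : wfnet V) :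
  (forall t, t \in tr M -> exists y, fl M t y) ->
  forall t, t \in tr (liftN M) -> exists y, fl (liftN M) t y.
Proof.
move=> H [t|b]; rewrite /liftN /lset /= inE // => /H [y Hy]; by exists (inl y).
Qed.

Lemma lift_sound (V : finType) (M : wfnet V) : psub_sound M -> psub_sound (liftN M).
Proof.
apply: (@transport _ _ M (liftN M) inl).
- by move=> x y [].
- by move=> x; rewrite /liftN /lset /= inE.
- by move=> [v|b]; rewrite /liftN /lset /= inE // => _; exists v.
- by [].
- by move=> [a|a] [b|b] //= _; split; [exists a|exists b].
- by move=> x; rewrite /liftN /lset /= inE.
- by move=> [v|b]; rewrite /liftN /lset /= inE // => _; exists v.
- by move=> x; rewrite /liftN /lset /= inE.
- by move=> [v|b]; rewrite /liftN /lset /= inE // => _; exists v.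
Qed.

Definition eL (V : finType) (x : (V + bool)%type) : ((V + bool) + bool)%type :=
  match x with inl v => inl (inl v) | inr b => inr b end.

Lemma eL_inj (V : finType) : injective (@eL V).
Proof. by move=> [a|a] [b|b] //= [->]. Qed.

Lemma pc_lift_sound (V : finType) (M : wfnet V) :
  psub_sound (pc M) -> psub_sound (pc (liftN M)).
Proof.
apply: (@transport _ _ (pc M) (pc (liftN M)) (@eL V)).
- exact: eL_inj.
- by move=> [v|b]; rewrite /= !inE.
- by move=> [[v|b]|b]; rewrite /= !inE // => _; exists (inl v).
- by move=> [a|[]] [b|[]]; rewrite /= /liftN /lset /= ?inE.
- move=> [[a|a]|c] [[b|b]|d] //=; rewrite /liftN /lset /= ?inE //.
  + by move=> _; split; [exists (inl a)|exists (inl b)].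
  + by move=> _; split; [exists (inl a)|exists (inr d)].
  + by case: d.
  + by move=> _; split; [exists (inr c)|exists (inl b)].
  + by case: c.
  + by move=> _; split; [exists (inr c)|exists (inr d)].
- by move=> [v|[]]; rewrite /= !in_set1.
- by move=> [[v|b]|b]; rewrite /= in_set1 // => /eqP ->; exists (inr false).
- by move=> [v|[]]; rewrite /= !in_set1.
- by move=> [[v|b]|b]; rewrite /= in_set1 // => /eqP ->; exists (inr true).
Qed.

Lemma pc_lift_post (V : finType) (M : wfnet V) :
  (forall t, t \in tr (pc M) -> exists y, fl (pc M) t y) ->
  forall t, t \in tr (pc (liftN M)) -> exists y, fl (pc (liftN M)) t y.
Proof.
move=> H [[v|b]|b]; rewrite /= !inE //= => Hv.
have [y Hy] : exists y, fl (pc M) (inl v) y by apply: H; rewrite inE.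
exists (eL y); move: Hy; case: y => [w|[]] //=; by rewrite /liftN /lset /= ?inE.
Qed.

Lemma lift_disj (V : finType) (N M : wfnet V) :
  [disjoint nodes N & nodes M] -> [disjoint nodes (pc N) & nodes (liftN M)].
Proof.
move=> H; rewrite disjoint_subset; apply/subsetP => x.
case: x => [v|b]; rewrite /nodes /liftN /lset /= !inE //= => Hv.
apply/negP => Hm.
have vN : v \in nodes N by rewrite /nodes inE.
have := disjointFr H vN; rewrite /nodes inE Hm => E; discriminate E.
Qed.

Lemma pc_petri (V : finType) (N : wfnet V) : is_tWF N -> is_petri (pc N).
Proof.
case=> P [_ [_ [Hi [Ho _]]]]; split.
- apply/setP => [[v|b]]; rewrite !inE //=.
  by apply/negP => /andP[H1 H2]; exact: petri_pt P H1 H2.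
- move=> [a|[]] [b|[]] //=; rewrite !inE /=.
  + by move=> F; case/orP: (petri_fl P F) => /andP[-> ->]; [left|right].
  + by move=> H; right; rewrite (subsetP Ho _ H).
  + by move=> H; left; rewrite (subsetP Hi _ H).
Qed.

Lemma pc_io (V : finType) (N : wfnet V) :
  inp (pc N) \subset nodes (pc N) /\ outp (pc N) \subset nodes (pc N).
Proof. by split; apply/subsetP => x; rewrite /nodes /= !inE => /eqP ->. Qed.

Lemma pWF_post X (M : wfnet X) : is_pWF M -> forall t, t \in tr M -> exists y, fl M t y.
Proof.
case=> P [_ [_ [_ [Ho [_ Hc]]]]] t Ht.
have [o Hoo Co] : exists2 o, o \in outp M & connect (fl M) t o by apply: Hc; rewrite /nodes inE Ht orbT.
have Hot : o != t.
  by apply/eqP => E; subst o; exact: petri_pt P (subsetP Ho _ Hoo) Ht.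
have [z Hz _] := first_step Co Hot; by exists z.
Qed.

Lemma tWF_post X (M : wfnet X) : is_tWF M -> forall t, t \in tr (pc M) -> exists y, fl (pc M) t y.
Proof.
case=> P [_ [_ [_ [Ho [_ Hc]]]]] [t|b]; rewrite /= inE // => Ht.
have [o Hoo Co] : exists2 o, o \in outp M & connect (fl M) t o by apply: Hc; rewrite /nodes inE Ht orbT.
case: (eqVneq o t) => [E|Hot].
  by subst o; exists (inr true).
have [z Hz _] := first_step Co Hot; by exists (inl z).
Qed.

Lemma pWF_not_tWF X (A : wfnet X) : is_pWF A -> is_tWF A -> False.
Proof.
case=> P [Hi0 [_ [Hi _]]] [_ [_ [_ [Hi' _]]]].
have [x Hx] := set0Pn _ Hi0.
exact: petri_pt P (subsetP Hi _ Hx) (subsetP Hi' _ Hx).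
Qed.

Section Equiv.
Variables (V : finType) (N M : wfnet V) (n : V).

Lemma eq_tr : tr (pc (subst N n M)) = tr (subst (pc N) (inl n) (liftN M)).
Proof. by apply/setP => [[v|b]]; rewrite /= !inE /liftN /lset /= ?inE. Qed.

Lemma inl_eq (A B : eqType) (a b : A) : (inl a == inl b :> (A + B)%type) = (a == b).
Proof. by apply/eqP/eqP => [[]|->]. Qed.

Lemma eq_fl : fl (pc (subst N n M)) =2 fl (subst (pc N) (inl n) (liftN M)).
Proof.
move=> [a|c] [b|d]; rewrite /= /lset ?inE ?inl_eq.
- by [].
- case: d; rewrite ?andbF //=.
  case: ifP => Hn; rewrite ?inE; case: (eqVneq a n) => [E|Han];
    rewrite ?E ?Hn ?andbF ?andbT ?orbF //=.
- case: c; rewrite ?andbF //=.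
  case: ifP => Hn; rewrite ?inE; case: (eqVneq b n) => [E|Hbn];
    rewrite ?E ?Hn ?andbF ?andbT ?orbF //=.
- by case: c; case: d; rewrite ?andbF.
Qed.

Lemma eq_inp : inp (pc (subst N n M)) = inp (subst (pc N) (inl n) (liftN M)).
Proof. by rewrite /= in_set1. Qed.
Lemma eq_outp : outp (pc (subst N n M)) = outp (subst (pc N) (inl n) (liftN M)).
Proof. by rewrite /= in_set1. Qed.

End Equiv.

Lemma io_sub (V : finType) (n : V) (S1 S2 IN IM : {set V}) :
  IN \subset S1 -> (n \in IN -> IM \subset S2) ->
  (if n \in IN then IN :\ n :|: IM else IN) \subset (S1 :\ n :|: S2).
Proof.
case: ifP => Hn H1 H2; apply/subsetP => x; rewrite !inE.
- case/orP => [/andP[-> /(subsetP H1) ->] //|/(subsetP (H2 isT)) ->]; by rewrite orbT.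
- move=> Hx; rewrite (subsetP H1 _ Hx) andbT.
  by case: (eqVneq x n) => [E|//]; subst x; rewrite Hx in Hn.
Qed.

Lemma W_outp0' (V : finType) (N M : wfnet V) (n : V) :
  outp M != set0 -> outp N != set0 -> outp (subst N n M) != set0.
Proof.
move=> HoM H; rewrite /subst /=; case: ifP => // _.
have [i Hi] := set0Pn _ HoM; apply/set0Pn; exists i; by rewrite !inE Hi orbT.
Qed.
Lemma W_inp0' (V : finType) (N M : wfnet V) (n : V) :
  inp M != set0 -> inp N != set0 -> inp (subst N n M) != set0.
Proof.
move=> HoM H; rewrite /subst /=; case: ifP => // _.
have [i Hi] := set0Pn _ HoM; apply/set0Pn; exists i; by rewrite !inE Hi orbT.
Qed.

Lemma sub_nodes (V : finType) (N : wfnet V) (S : {set V}) :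
  (S \subset pl N) || (S \subset tr N) -> S \subset nodes N.
Proof.
case/orP => H; apply/subsetP => x /(subsetP H); rewrite /nodes inE => ->; by rewrite ?orbT.
Qed.

Lemma WF_facts (V : finType) (N : wfnet V) : is_WF N ->
  [/\ is_petri N, inp N != set0, outp N != set0, wf_connected N &
      inp N \subset nodes N /\ outp N \subset nodes N].
Proof.
case=> [[P [i0 [o0 [Hi [Ho Hc]]]]] | [P [i0 [o0 [Hi [Ho Hc]]]]]];
  split => //; split; apply: sub_nodes; by rewrite ?Hi ?Ho ?orbT.
Qed.

Unset Implicit Arguments.

Theorem mainTheorem15 (V : finType) (N M : wfnet V) (n : V) :
  is_WF N -> is_WF M ->
  [disjoint nodes N & nodes M] ->
  sub_sound N -> sub_sound M ->
  (n \in pl N /\ is_pWF M) \/ (n \in tr N /\ is_tWF M) ->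
  is_WF (subst N n M) /\ sub_sound (subst N n M).
Proof.
move=> HN HM Hdis HsN HsM Hcase.
have [PN iN0 oN0 HcN [HiN HoN]] := WF_facts HN.
have [PM iM0 oM0 HcM [HiMn HoMn]] := WF_facts HM.
have HnN : n \in nodes N.
  by case: Hcase => [[H _]|[H _]]; rewrite /nodes inE H ?orbT.
have Hkind : (n \in pl N /\ inp M \subset pl M /\ outp M \subset pl M) \/
             (n \in tr N /\ inp M \subset tr M /\ outp M \subset tr M).
  case: Hcase => [[H [_ [_ [_ [Hi [Ho _]]]]]]|[H [_ [_ [_ [Hi [Ho _]]]]]]].
  - by left.
  - by right.
have PC := W_petri PN PM Hdis Hkind.
have CC := W_conn PN HnN Hkind HcN HcM iM0.
have kindP : n \in pl N -> inp M \subset pl M /\ outp M \subset pl M.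
  move=> Hp; case: Hkind => [[_ H]|[Ht _]] //; by case: (petri_pt PN Hp Ht).
have kindT : n \in tr N -> inp M \subset tr M /\ outp M \subset tr M.
  move=> Ht; case: Hkind => [[Hp _]|[_ H]] //; by case: (petri_pt PN Hp Ht).
case: HN => [HNp|HNt].
- have [_ [_ [_ [HiNp [HoNp _]]]]] := HNp.
  have HWF : is_pWF (subst N n M).
    split => //; split; first exact: W_inp0'.
    split; first exact: W_outp0'.
    split; first by apply: io_sub => // /(subsetP HiNp) /kindP [].
    split => //; by apply: io_sub => // /(subsetP HoNp) /kindP [].
  split; first by left.
  split => [_|HtC]; last by case: (pWF_not_tWF HWF HtC).
  case: Hcase => [[HnP HMp] | [HnT HMt]].
  + have [HiM HoM] := kindP HnP.
    exact: (GP_sound PN PM Hdis HnP HiN HoN HiM HoM oM0 (pWF_post HMp) (HsN.1 HNp) (HsM.1 HMp)).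
  + have [HiM HoM] := kindT HnT.
    have HnI : n \notin inp N.
      by apply/negP => /(subsetP HiNp) Hp; exact: petri_pt PN Hp HnT.
    have HnO : n \notin outp N.
      by apply/negP => /(subsetP HoNp) Hp; exact: petri_pt PN Hp HnT.
    exact: (GT_sound PN PM Hdis HnT HnI HnO HiN HoN HiM HoM (tWF_post HMt) (HsN.1 HNp) (HsM.2 HMt)).
- have [_ [_ [_ [HiNt [HoNt _]]]]] := HNt.
  have HWF : is_tWF (subst N n M).
    split => //; split; first exact: W_inp0'.
    split; first exact: W_outp0'.
    split; first by apply: io_sub => // /(subsetP HiNt) /kindT [].
    split => //; by apply: io_sub => // /(subsetP HoNt) /kindT [].
  split; first by right.
  split => [HpC|_]; first by case: (pWF_not_tWF HpC HWF).
  apply: (psub_eq (esym (eq_tr N M n)) (fun x y => esym (eq_fl N M n x y))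
                  (esym (eq_inp N M n)) (esym (eq_outp N M n))).
  have PpcN := pc_petri HNt.
  have [HiN' HoN'] := pc_io N.
  have Hdis' := lift_disj Hdis.
  have PlM := lift_petri PM.
  case: Hcase => [[HnP HMp] | [HnT HMt]].
  + have [HiM HoM] := kindP HnP.
    have HnP' : inl n \in pl (pc N) by rewrite inE.
    exact: (GP_sound PpcN PlM Hdis' HnP' HiN' HoN' (lset_sub HiM) (lset_sub HoM)
             (lset0 oM0) (lift_post (pWF_post HMp)) (HsN.2 HNt) (lift_sound (HsM.1 HMp))).
  + have [HiM HoM] := kindT HnT.
    have HnT' : inl n \in tr (pc N) by rewrite inE.
    have HnI' : inl n \notin inp (pc N) by rewrite /= in_set1.
    have HnO' : inl n \notin outp (pc N) by rewrite /= in_set1.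
    exact: (GT_sound PpcN PlM Hdis' HnT' HnI' HnO' HiN' HoN' (lset_sub HiM) (lset_sub HoM)
             (pc_lift_post (tWF_post HMt)) (HsN.2 HNt) (pc_lift_sound (HsM.2 HMt))).
Qed.
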